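(* Let $x=(x_1,\dots,x_{|x|})$ and $y=(y_1,\dots,y_{|y|})$ be two finite sequences of strings and let $\lambda\ge 0$. Then the minimum of $\mathrm{error}_\lambda(T)$ over all labeled summary trees $T$ of $\{x,y\}$ equals $\mathsf{EDG}(x,y,\lambda)$, and the tree $T^\ast=\textsc{BuildBifurcation}(x,y,\lambda)$ is an optimal summary tree for $\{x,y\}$ with node cost $\lambda$, with $\mathrm{error}_\lambda(T^\ast)=\mathsf{EDG}(x,y,\lambda)$.
   Context: Strings are over a finite alphabet; $\varepsilon$ is the empty string and $\mathsf{ED}$ is the classical Levenshtein edit distance between strings (unit cost for character insertion, deletion and substitution). A string sequence is a finite list of strings. Asymmetric edit distance: for string sequences $x,y$, $\mathsf{AED}(x,y)$ is the minimum cost of transforming $x$ into $y$ using only the operations (i) inserting a string $w$ into $x$, costing $\mathsf{ED}(w,\varepsilon)$, and (ii) substituting a string $w$ of $x$ by $w'$, costing $\mathsf{ED}(w,w')$; no string of $x$ may be deleted (so $\mathsf{AED}(x,y)$ is defined only when $|x|\le|y|$). Labeled summary tree of a set $X$ of string sequences: a rooted tree $T$ whose root is a special sentinel node and whose other nodes are each labeled by a string, together with a map $f$ assigning to each $x\in X$ a node $v_x$ of $T$. $L_T(v)$ denotes the sequence of labels on the path from the root (excluding the sentinel) to $v$; $|T|$ is the number of non-sentinel nodes. For $\lambda\ge0$, $\mathrm{error}_\lambda(T)=\sum_{x\in X}\mathsf{AED}(x,L_T(v_x))+\lambda|T|$, where the tree must satisfy $|x|\le|L_T(v_x)|$ for every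 $x$ (so that each $\mathsf{AED}$ is defined). An optimal summary tree minimizes $\mathrm{error}_\lambda$. Edit distance with give-up: for sequences $x,y$ (1-indexed), define $\mathsf{EDG}(i,j,\lambda)$ for $1\le i\le|x|+1$, $1\le j\le|y|+1$ by $\mathsf{EDG}(|x|+1,|y|+1,\lambda)=0$, $\mathsf{EDG}(i,|y|+1,\lambda)=\lambda(|x|-i+1)$, $\mathsf{EDG}(|x|+1,j,\lambda)=\lambda(|y|-j+1)$, and otherwise $\mathsf{EDG}(i,j,\lambda)$ is the minimum of: $\mathsf{EDG}(i+1,j+1,\lambda)+\lambda+\mathsf{ED}(x_i,y_j)$ (substitution); $\mathsf{EDG}(i,j+1,\lambda)+\lambda+\mathsf{ED}(\varepsilon,y_j)$ (insertion); $\mathsf{EDG}(i+1,j,\lambda)+\lambda+\mathsf{ED}(x_i,\varepsilon)$ (deletion); $\lambda(|x|-i+1)+\lambda(|y|-j+1)$ (give up). Set $\mathsf{EDG}(x,y,\lambda)=\mathsf{EDG}(1,1,\lambda)$. $\textsc{BuildBifurcation}(x,y,\lambda)$ is the tree built recursively along an optimal choice in this recurrence: if both sequences are empty, the empty tree (just the sentinel); if the chosen option is insertion of $y_1$ (or $x$ is empty), a root-child node labeled $y_1$ with subtree $\textsc{BuildBifurcation}(x,y_{2..|y|},\lambda)$ below it; if deletion of $x_1$ (or $y$ is empty), a node labeled $x_1$ with subtree $\textsc{BuildBifurcation}(x_{2..|x|},y,\lambda)$; if substitution, a node labeled $x_1$ with subtree $\textsc{BuildBifurcation}(x_{2..|x|},y_{2..|y|},\lambda)$;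 if give up, two disjoint paths below the current root, labeled successively by the remaining strings of $x$ and of $y$ respectively. Whenever the node corresponding to the last string $x_{|x|}$ (resp. $y_{|y|}$) is placed, $x$ (resp. $y$) is mapped to that node. *)

(* Defs.v *)
From HB Require Import structures.
From mathcomp Require Import all_boot all_order all_algebra.
From mathcomp Require Import boolp.
Set Implicit Arguments. Unset Strict Implicit. Unset Printing Implicit Defensive.
Import Order.TTheory GRing.Theory Num.Theory.
Local Open Scope ring_scope.

Section SummaryTrees.
Variable A : finType.
Local Notation string := (seq A).
Local Notation sseq := (seq string).

Fixpoint ED (s t : string) : nat :=
  match s with
  | [::] => size t
  | a :: s' =>
    let fix EDs (t : string) : nat :=
      match t with
      | [::] => size s
      | b :: t' => minn (ED s' t' + (a != b))%N
                        (minn (EDs t').+1 (ED s' (b :: t')).+1)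
      end in EDs t
  end.

Inductive aed_step : sseq -> sseq -> nat -> Prop :=
| aed_ins (s : sseq) (i : nat) (w : string) :
    (i <= size s)%N ->
    aed_step s (take i s ++ w :: drop i s) (ED w [::])
| aed_sub (s : sseq) (i : nat) (w' : string) :
    (i < size s)%N ->
    aed_step s (set_nth [::] s i w') (ED (nth [::] s i) w').

Inductive aed_reach : sseq -> sseq -> nat -> Prop :=
| aed_refl (s : sseq) : aed_reach s s 0
| aed_trans (s u t : sseq) (c1 c2 : nat) :
    aed_step s u c1 -> aed_reach u t c2 -> aed_reach s t (c1 + c2)%N.

(* AED x y = minimum cost of a transformation of x into y
   (meaningful when size x <= size y; set to 0 when no transformation exists). *)
Definition aed_cost (x y : sseq) : pred nat := fun c => `[< aed_reach x y c >].

Definition AED (x y : sseq) : nat :=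
  match pselect (exists c, aed_cost x y c) with
  | left H => ex_minn H
  | right _ => 0%N
  end.

Inductive ltree := LNode of string & seq ltree.

Definition label (t : ltree) : string := let: LNode w _ := t in w.
Definition children (t : ltree) : seq ltree := let: LNode _ ch := t in ch.

(* A tree with a sentinel root is represented by the forest of the children of
   the sentinel.  Nodes are addressed by paths (lists of child indices) from the
   sentinel; the empty path is the sentinel itself.  [labels_at F v] is
   [Some L_T(v)] when v is a node of the tree, and [None] otherwise. *)
Fixpoint labels_at (F : seq ltree) (v : seq nat) : option sseq :=
  match v with
  | [::] => Some [::]
  | i :: v' =>
    match onth F i with
    | None => None
    | Some t => omap (cons (label t)) (labels_at (children t) v')
    end
  end.

Definition L_T (F : seq ltree) (v : seq nat) : sseq := odflt [::] (labels_at F v).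

Fixpoint tsize (t : ltree) : nat :=
  let: LNode _ ch := t in (sumn (map tsize ch)).+1.

Definition tree_size (F : seq ltree) : nat := sumn (map tsize F).

(* A labeled summary tree of {x, y}: forest F (children of the sentinel) with
   nodes vx, vy assigned to x and y, such that each AED is defined. *)
Definition summary_tree_of (x y : sseq) (F : seq ltree) (vx vy : seq nat) :=
  exists Lx Ly, [/\ labels_at F vx = Some Lx, labels_at F vy = Some Ly,
                    (size x <= size Lx)%N & (size y <= size Ly)%N].

Variable R : realFieldType.

Definition error (lam : R) (x y : sseq) (F : seq ltree) (vx vy : seq nat) : R :=
  (AED x (L_T F vx))%:R + (AED y (L_T F vy))%:R + lam * (tree_size F)%:R.

(* EDG on suffixes: EDG x y computes EDG(i,j,lam) of the paper where x, y are
   the suffixes x_{i..|x|}, y_{j..|y|}; size x = |x| - i + 1. *)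
Fixpoint EDG (lam : R) (x y : sseq) : R :=
  match x with
  | [::] => lam * (size y)%:R
  | a :: x' =>
    let fix EDGx (y : sseq) : R :=
      match y with
      | [::] => lam * (size x)%:R
      | b :: y' =>
        Order.min
          (Order.min (EDG lam x' y' + lam + (ED a b)%:R)
                     (EDGx y' + lam + (ED [::] b)%:R))
          (Order.min (EDG lam x' (b :: y') + lam + (ED a [::])%:R)
                     (lam * (size x)%:R + lam * (size y)%:R))
      end in EDGx y
  end.

Fixpoint chain (a : string) (s : sseq) : ltree :=
  LNode a (if s is b :: s' then [:: chain b s'] else [::]).

(* [Bif lam x y F vx vy]: (F, vx, vy) is a possible output of
   BuildBifurcation(x, y, lam), for ANY optimal choice made at each step
   (ties are resolved arbitrarily).  Paths vx, vy are relative to the current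
   root; an exhausted sequence is mapped to the current root, i.e. to the node
   where its last string was placed (or the sentinel at top level). *)
Inductive Bif (lam : R) : sseq -> sseq -> seq ltree -> seq nat -> seq nat -> Prop :=
| Bif_nil : Bif lam [::] [::] [::] [::] [::]
| Bif_xnil (b : string) (y : sseq) F vx vy :
    Bif lam [::] y F vx vy ->
    Bif lam [::] (b :: y) [:: LNode b F] [::] (0%N :: vy)
| Bif_ynil (a : string) (x : sseq) F vx vy :
    Bif lam x [::] F vx vy ->
    Bif lam (a :: x) [::] [:: LNode a F] (0%N :: vx) [::]
| Bif_sub a b x y F vx vy :
    EDG lam (a :: x) (b :: y) = EDG lam x y + lam + (ED a b)%:R ->
    Bif lam x y F vx vy ->
    Bif lam (a :: x) (b :: y) [:: LNode a F] (0%N :: vx) (0%N :: vy)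
| Bif_ins a b x y F vx vy :
    EDG lam (a :: x) (b :: y) = EDG lam (a :: x) y + lam + (ED [::] b)%:R ->
    Bif lam (a :: x) y F vx vy ->
    Bif lam (a :: x) (b :: y) [:: LNode b F] (0%N :: vx) (0%N :: vy)
| Bif_del a b x y F vx vy :
    EDG lam (a :: x) (b :: y) = EDG lam x (b :: y) + lam + (ED a [::])%:R ->
    Bif lam x (b :: y) F vx vy ->
    Bif lam (a :: x) (b :: y) [:: LNode a F] (0%N :: vx) (0%N :: vy)
| Bif_giveup a b x y :
    EDG lam (a :: x) (b :: y) =
      lam * (size (a :: x))%:R + lam * (size (b :: y))%:R ->
    Bif lam (a :: x) (b :: y) [:: chain a x; chain b y]
        (0%N :: nseq (size x) 0%N) (1%N :: nseq (size y) 0%N).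

End SummaryTrees.

(* Main.v *)
Require Import Defs.
From HB Require Import structures.
From mathcomp Require Import all_boot all_order all_algebra.
From mathcomp Require Import boolp.
From mathcomp Require Import zify ring lra.
Import Order.TTheory GRing.Theory Num.Theory.

Lemma ED_nil_l {A : finType} (t : seq A) : ED [::] t = size t.
Proof. by []. Qed.
Lemma ED_nil_r {A : finType} (s : seq A) : ED s [::] = size s.
Proof. by case: s. Qed.
Lemma ED_cons {A : finType} (a b : A) s t :
  ED (a :: s) (b :: t) =
  minn (ED s t + (a != b)) (minn (ED (a :: s) t).+1 (ED s (b :: t)).+1).
Proof. by []. Qed.

Lemma ED_lb {A : finType} (s t : seq A) :
  (size t - size s <= ED s t) && (size s - size t <= ED s t).
Proof.
elim: s t => [|a s IHs] t; first by rewrite ED_nil_l /=; apply/andP; split; lia.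
elim: t => [|b t IHt]; first by rewrite ED_nil_r /= ?subn0 ?sub0n ?leqnn; lia.
rewrite ED_cons.
move: (IHs t) (IHs (b :: t)) IHt => /andP[h1 h2] /andP[h3 h4] /andP[h5 h6].
move: (ED (a :: s) t) h5 h6 (ED s t) h1 h2 (ED s (b :: t)) h3 h4 => e1 h5 h6 e2 h1 h2 e3 h3 h4.
rewrite /= in h3 h4 h5 h6 *.
apply/andP; split; rewrite !leq_min; apply/andP; split; try (apply/andP; split); lia.
Qed.

Lemma ED_ub {A : finType} (s t : seq A) : ED s t <= size s + size t.
Proof.
elim: s t => [|a s IHs] t; first by rewrite ED_nil_l.
case: t => [|b t]; first by rewrite ED_nil_r addn0.
rewrite ED_cons /=; have := IHs t; lia.
Qed.

Lemma ED_refl {A : finType} (s : seq A) : ED s s = 0.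
Proof. elim: s => [|a s IH] //; rewrite ED_cons IH eqxx; lia. Qed.

Lemma ED_sym {A : finType} (s t : seq A) : ED s t = ED t s.
Proof.
elim: s t => [|a s IHs] t; first by rewrite ED_nil_l ED_nil_r.
elim: t => [|b t IHt]; first by rewrite ED_nil_l ED_nil_r.
rewrite !ED_cons IHt (IHs t) (IHs (b :: t)) [b == a]eq_sym; lia.
Qed.

Lemma ED_tri {A : finType} (s t u : seq A) : ED s u <= ED s t + ED t u.
Proof.
move: {2}(size s + size t + size u) (leqnn (size s + size t + size u)) => n.
elim: n s t u => [|n IH] s t u.
  by case: s => [|a s] //; case: t => [|b t] //; case: u.
case: s => [|a s1].
  move=> _; rewrite !ED_nil_l; move: (ED_lb t u) => /andP[h _]; lia.
case: t => [|b t1].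
  move=> _; rewrite !ED_nil_r ED_nil_l; have := ED_ub (a :: s1) u; lia.
case: u => [|c u1].
  move=> _; rewrite !ED_nil_r; move: (ED_lb (a :: s1) (b :: t1)) => /andP[_ h]; lia.
move=> Hn; rewrite /= in Hn.
have H1 := IH s1 t1 u1 ltac:(lia).
have H2 := IH (a :: s1) (b :: t1) u1 ltac:(rewrite /=; lia).
have H3 := IH s1 (b :: t1) (c :: u1) ltac:(rewrite /=; lia).
have H4 := IH (a :: s1) t1 u1 ltac:(rewrite /=; lia).
have H5 := IH (a :: s1) t1 (c :: u1) ltac:(rewrite /=; lia).
have H6 := IH s1 t1 (c :: u1) ltac:(rewrite /=; lia).
have Hb : (a != c) <= (a != b) + (b != c).
  case: (eqVneq a b) => [->|nab] /=; first by [].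
  by case: (a != c).
have E1 := ED_cons a c s1 u1; have E2 := ED_cons a b s1 t1; have E3 := ED_cons b c t1 u1.
move: Hb H1 H2 H3 H4 H5 H6.
lia.
Qed.

Fixpoint Al {A : finType} (s t : seq (seq A)) : nat :=
  match t with
  | [::] => 0
  | p :: t' =>
    match s with
    | [::] => size p + Al [::] t'
    | a :: s' => if size s' < size t' then minn (ED a p + Al s' t') (size p + Al s t')
                 else ED a p + Al s' t'
    end
  end.

Lemma Al_refl {A : finType} (t : seq (seq A)) : Al t t = 0.
Proof. by elim: t => [|p t IH] //=; rewrite ltnn ED_refl IH. Qed.

Lemma Al_skip {A : finType} (s t : seq (seq A)) p :
  size s <= size t -> Al s (p :: t) <= size p + Al s t.
Proof.
case: s => [|a s] //= H; rewrite H; exact: geq_minr.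
Qed.

Lemma Al_sub {A : finType} (t s : seq (seq A)) i w :
  i < size s -> Al s t <= ED (nth [::] s i) w + Al (set_nth [::] s i w) t.
Proof.
elim: t s i => [|p t IH] s i Hi; first by [].
case: s Hi => [|a s] // Hi.
case: i Hi => [|k] Hi /=.
  have T := ED_tri a w p. have I1 := IH (a :: s) 0 isT.
  move: I1 => /= I1.
  case: ifP => _; lia.
have Hk : k < size s by [].
have I1 := IH s k Hk. have I2 := IH (a :: s) k.+1 Hk.
move: I2 => /= I2.
rewrite size_set_nth (maxn_idPr Hk).
case: ifP => _; lia.
Qed.

Lemma Al_ins {A : finType} (t s : seq (seq A)) i w :
  i <= size s -> size s < size t ->
  Al s t <= ED w [::] + Al (take i s ++ w :: drop i s) t.
Proof.
elim: t s i => [|p t IH] s i Hi Hs; first by [].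
case: i Hi => [|k] Hi.
  rewrite take0 drop0 cat0s.
  have Hs' : size s <= size t by [].
  have S := @Al_skip _ s t p Hs'.
  have T := ED_tri p w [::]. rewrite (ED_sym p w) (ED_nil_r p) in T.
  rewrite [Al (w :: s) _]/=.
  case: ifP => H.
    have I := IH s 0 (leq0n _) H. rewrite take0 drop0 cat0s in I. lia.
  lia.
case: s Hi Hs => [|a s] // Hi Hs.
have Hk : k <= size s by [].
have Hst : size s < size t by [].
have I1 := IH s k Hk Hst.
rewrite [take _ _]/= [drop _ _]/= cat_cons.
have Hsz : size (take k s ++ w :: drop k s) = (size s).+1.
  by rewrite size_cat /= addnS -size_cat cat_take_drop.
rewrite /= Hsz Hst.
case: ifP => H.
  have I2 := IH (a :: s) k.+1 Hi H. move: I2 => /= I2. lia.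
lia.
Qed.

Lemma reach_size {A : finType} {s t : seq (seq A)} {c} :
  aed_reach s t c -> size s <= size t.
Proof.
elim=> {s t c} [s|s u t c1 c2 St _ IH] //.
apply: leq_trans IH; case: St => [s' i w Hi|s' i w Hi].
  by rewrite size_cat /= addnS -size_cat cat_take_drop.
by rewrite size_set_nth leq_maxr.
Qed.

Lemma Al_reach {A : finType} {s t : seq (seq A)} {c} :
  aed_reach s t c -> Al s t <= c.
Proof.
elim=> {s t c} [s|s u t c1 c2 St Rt IH]; first by rewrite Al_refl.
have Hu := reach_size Rt.
case: St Hu IH => [s' i w Hi|s' i w Hi] Hu IH.
  have Hsz : size (take i s' ++ w :: drop i s') = (size s').+1.
    by rewrite size_cat /= addnS -size_cat cat_take_drop.
  have Hlt : size s' < size t by move: Hu; rewrite Hsz.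
  have := @Al_ins _ t s' i w Hi Hlt. lia.
have := @Al_sub _ t s' i w Hi. lia.
Qed.

Lemma step_cons {A : finType} (a : seq A) {s u c} :
  aed_step s u c -> aed_step (a :: s) (a :: u) c.
Proof.
case=> [s' i w Hi|s' i w Hi].
  exact (@aed_ins _ (a :: s') i.+1 w Hi).
exact (@aed_sub _ (a :: s') i.+1 w Hi).
Qed.

Lemma reach_cat {A : finType} {s u t : seq (seq A)} {c1 c2} :
  aed_reach s u c1 -> aed_reach u t c2 -> aed_reach s t (c1 + c2).
Proof.
elim=> {s u c1} [s|s v u d1 d2 St _ IH] Rt //.
rewrite -addnA; exact: aed_trans St (IH Rt).
Qed.

Lemma reach_step {A : finType} {s u : seq (seq A)} {c} :
  aed_step s u c -> aed_reach s u c.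
Proof. move=> St; rewrite -[c]addn0; exact: aed_trans St (aed_refl _). Qed.

Lemma reach_cons {A : finType} (a : seq A) {s t c} :
  aed_reach s t c -> aed_reach (a :: s) (a :: t) c.
Proof.
elim=> {s t c} [s|s u t c1 c2 St _ IH]; first exact: aed_refl.
exact: aed_trans (step_cons a St) IH.
Qed.

Lemma reach_exists {A : finType} {L x : seq (seq A)} :
  size x <= size L -> exists c, aed_reach x L c.
Proof.
elim: L x => [|p L IH] [|a x] //=.
- by move=> _; exists 0; exact: aed_refl.
- move=> _; have [c Hc] := IH [::] isT.
  exists (c + ED p [::]); apply: reach_cat Hc _.
  have := @aed_ins _ L 0 p (leq0n _); rewrite take0 drop0 cat0s.
  exact: reach_step.
- move=> H; have [c Hc] := IH x H.
  exists (c + ED a p); apply: reach_cat (reach_cons a Hc) _.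
  exact: reach_step (@aed_sub _ (a :: L) 0 p isT).
Qed.

Lemma AED_le {A : finType} {x L : seq (seq A)} {c} :
  aed_reach x L c -> AED x L <= c.
Proof.
move=> H; rewrite /AED; case: pselect => [E|E].
  case: ex_minnP => m _ Hmin; apply: Hmin; exact/asboolP.
by exfalso; apply: E; exists c; exact/asboolP.
Qed.

Lemma AED_reach {A : finType} {x L : seq (seq A)} :
  size x <= size L -> aed_reach x L (AED x L).
Proof.
move=> Hs; rewrite /AED; case: pselect => [E|E].
  by case: ex_minnP => m /asboolP.
by exfalso; have [c Hc] := reach_exists Hs; apply: E; exists c; exact/asboolP.
Qed.

Lemma Al_AED {A : finType} {x L : seq (seq A)} :
  size x <= size L -> Al x L <= AED x L.
Proof. by move=> Hs; apply: Al_reach (AED_reach Hs). Qed.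

Lemma AED_cons {A : finType} (a : seq A) {x L : seq (seq A)} :
  size x <= size L -> AED (a :: x) (a :: L) <= AED x L.
Proof. by move=> Hs; apply: AED_le; apply: reach_cons; apply: AED_reach. Qed.

Lemma AED_subst {A : finType} (a b : seq A) {y L : seq (seq A)} :
  size y <= size L -> AED (b :: y) (a :: L) <= ED a b + AED y L.
Proof.
move=> Hs; apply: AED_le; rewrite ED_sym.
apply: reach_cat (reach_step (@aed_sub _ (b :: y) 0 a isT)) _.
exact: reach_cons (AED_reach Hs).
Qed.

Lemma AED_insf {A : finType} (b : seq A) {x L : seq (seq A)} :
  size x <= size L -> AED x (b :: L) <= AED x L + size b.
Proof.
move=> Hs; apply: AED_le; rewrite -(ED_nil_r b).
apply: reach_cat (AED_reach Hs) _.
have := @aed_ins _ L 0 b (leq0n _); rewrite take0 drop0 cat0s.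
exact: reach_step.
Qed.

Lemma AED_self {A : finType} (x : seq (seq A)) : AED x x = 0.
Proof. by apply/eqP; rewrite -leqn0; apply: AED_le (aed_refl _). Qed.

Lemma tree_size_cons {A : finType} (t : ltree A) F :
  tree_size (t :: F) = (Defs.tsize t + tree_size F)%N.
Proof. by []. Qed.

Lemma tsize_children {A : finType} (t : ltree A) :
  Defs.tsize t = (tree_size (children t)).+1.
Proof. by case: t. Qed.

Lemma onth_size {A : finType} {F : seq (ltree A)} {i t} :
  onth F i = Some t -> Defs.tsize t <= tree_size F.
Proof.
elim: F i => [|t0 F IH] [|i] //=; rewrite tree_size_cons.
  by case=> <-; exact: leq_addr.
move=> /IH; lia.
Qed.

Lemma onth_size2 {A : finType} {F : seq (ltree A)} {i j t t'} :
  i != j -> onth F i = Some t -> onth F j = Some t' ->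
  Defs.tsize t + Defs.tsize t' <= tree_size F.
Proof.
elim: F i j => [|t0 F IH] [|i] [|j] //=; rewrite tree_size_cons.
- by move=> _ [<-] /onth_size; lia.
- by move=> _ /onth_size H [<-]; lia.
- by move=> nij H1 H2; have := IH i j nij H1 H2; lia.
Qed.

Lemma labels_size {A : finType} {F : seq (ltree A)} {v L} :
  labels_at F v = Some L -> size L <= tree_size F.
Proof.
elim: v F L => [|i v IH] F L /=; first by case=> <-.
case E: (onth F i) => [t|] //.
case E2: (labels_at (children t) v) => [L'|] //= [<-] /=.
have := IH _ _ E2; have := onth_size E; rewrite tsize_children; lia.
Qed.

Lemma tree_split {A : finType} {F : seq (ltree A)} {vx vy Lx Ly} :
  labels_at F vx = Some Lx -> labels_at F vy = Some Ly ->
  exists P Sx Sy, [/\ Lx = P ++ Sx, Ly = P ++ Sy &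
                      size P + size Sx + size Sy <= tree_size F].
Proof.
elim: vx F vy Lx Ly => [|i vx IH] F vy Lx Ly /=.
  case=> <- Hy; exists [::], [::], Ly; split => //=.
  exact: labels_size Hy.
case E: (onth F i) => [t|] //.
case E2: (labels_at (children t) vx) => [Lx'|] //= [<-].
have Sx := labels_size E2; have Tx := onth_size E; rewrite tsize_children in Tx.
case: vy => [|j vy] /=.
  case=> <-; exists [::], (label t :: Lx'), [::]; split => //=; lia.
case E3: (onth F j) => [t'|] //.
case E4: (labels_at (children t') vy) => [Ly'|] //= [<-].
have Sy := labels_size E4; have Ty := onth_size E3; rewrite tsize_children in Ty.
case: (eqVneq i j) => [eij|nij].
  subst j; rewrite E in E3; case: E3 => Et; subst t'.
  have [P [Sx' [Sy' [-> -> HP]]]] := IH _ _ _ _ E2 E4.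
  exists (label t :: P), Sx', Sy'; split => //=; lia.
exists [::], (label t :: Lx'), (label t' :: Ly'); split => //=.
have := onth_size2 nij E E3; rewrite !tsize_children; lia.
Qed.

Lemma Al_cases {A : finType} (a p : seq A) x L : size x <= size L ->
  (Al (a :: x) (p :: L) = ED a p + Al x L) \/
  (Al (a :: x) (p :: L) = size p + Al (a :: x) L /\ size x < size L).
Proof.
move=> H; rewrite [Al (a :: x) (p :: L)]/=; case: ifP => h; last by left.
case: (leqP (ED a p + Al x L) (size p + Al (a :: x) L)) => h2.
  by left.
by right.
Qed.

Local Open Scope ring_scope.

Section EDGs.
End EDGs.

Lemma EDG_cons {A : finType} {R : realFieldType} (lam : R) (a b : seq A) x y :
  EDG lam (a :: x) (b :: y) =
  Order.min (Order.min (EDG lam x y + lam + (ED a b)%:R)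
                       (EDG lam (a :: x) y + lam + (ED [::] b)%:R))
            (Order.min (EDG lam x (b :: y) + lam + (ED a [::])%:R)
                       (lam * (size (a :: x))%:R + lam * (size (b :: y))%:R)).
Proof. by []. Qed.

Lemma EDG_nil_l {A : finType} {R : realFieldType} (lam : R) (y : seq (seq A)) :
  EDG lam [::] y = lam * (size y)%:R.
Proof. by []. Qed.

Lemma EDG_nil_r {A : finType} {R : realFieldType} (lam : R) (x : seq (seq A)) :
  EDG lam x [::] = lam * (size x)%:R.
Proof. by case: x. Qed.

Lemma min4 {R : realFieldType} (u v w z : R) :
  let m := Order.min (Order.min u v) (Order.min w z) in
  [/\ m <= u, m <= v, m <= w & m <= z].
Proof.
by rewrite /= !ge_min !lexx !orbT.
Qed.

Lemma EDG_giveup {A : finType} {R : realFieldType} (lam : R) (x y : seq (seq A)) :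
  EDG lam x y <= lam * (size x)%:R + lam * (size y)%:R.
Proof.
case: x => [|a x]; first by rewrite EDG_nil_l /= mulr0 add0r.
case: y => [|b y]; first by rewrite EDG_nil_r /= mulr0 addr0.
by rewrite EDG_cons; case: (min4 (EDG lam x y + lam + (ED a b)%:R) (EDG lam (a :: x) y + lam + (ED [::] b)%:R) (EDG lam x (b :: y) + lam + (ED a [::])%:R) (lam * (size (a :: x))%:R + lam * (size (b :: y))%:R)).
Qed.

Lemma lam_mono {R : realFieldType} (lam : R) (m n : nat) :
  0 <= lam -> (m <= n)%N -> lam * m%:R <= lam * n%:R.
Proof. by move=> l0 h; apply: ler_wpM2l => //; rewrite ler_nat. Qed.

Lemma lamD {R : realFieldType} (lam : R) (m n : nat) :
  lam * (m + n)%:R = lam * m%:R + lam * n%:R.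
Proof. by rewrite natrD mulrDr. Qed.

Ltac genR :=
  repeat match goal with
  | |- context [EDG ?l ?u ?v] => generalize (EDG l u v); intro
  | |- context [GRing.natmul (GRing.one _) ?n] => generalize (GRing.natmul (GRing.one _) n); intro
  end.

Lemma lower {A : finType} {R : realFieldType} (lam : R) (P Sx Sy x y : seq (seq A)) :
  0 <= lam -> (size x <= size P + size Sx)%N -> (size y <= size P + size Sy)%N ->
  EDG lam x y <= (Al x (P ++ Sx))%:R + (Al y (P ++ Sy))%:R +
                 lam * (size P + size Sx + size Sy)%:R.
Proof.
move=> l0; elim: P x y => [|p P IH] x y Hx Hy.
  have G := EDG_giveup lam x y.
  rewrite [size [::]]/= in Hx Hy *.
  have M := lam_mono lam (size x + size y) (size Sx + size Sy) l0 ltac:(lia).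
  rewrite lamD in M; rewrite add0n.
  have := ler0n R (Al x Sx); have := ler0n R (Al y Sy); lra.
have Ha := ler0n R (Al x (p :: P ++ Sx)); have Hb := ler0n R (Al y (p :: P ++ Sy)).
rewrite [size (p :: P)]/= in Hx Hy *.
case: x Hx Ha => [|a x] Hx Ha.
  rewrite EDG_nil_l.
  have := lam_mono lam (size y) ((size P).+1 + size Sx + size Sy) l0 ltac:(lia).
  rewrite cat_cons; lra.
case: y Hy Hb => [|b y] Hy Hb.
  rewrite EDG_nil_r.
  have := lam_mono lam (size (a :: x)) ((size P).+1 + size Sx + size Sy) l0 ltac:(lia).
  rewrite cat_cons; lra.
rewrite [size (a :: x)]/= in Hx; rewrite [size (b :: y)]/= in Hy.
have -> : lam * ((size P).+1 + size Sx + size Sy)%:R =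
          lam * (size P + size Sx + size Sy)%:R + lam.
  by rewrite !addSn -addn1 lamD mulr1n mulr1.
rewrite !cat_cons.
have Ex := Al_cases a p x (P ++ Sx) ltac:(rewrite size_cat; lia).
have Ey := Al_cases b p y (P ++ Sy) ltac:(rewrite size_cat; lia).
have [m1 m2 m3 m4] := min4 (EDG lam x y + lam + (ED a b)%:R)
                       (EDG lam (a :: x) y + lam + (ED [::] b)%:R)
                       (EDG lam x (b :: y) + lam + (ED a [::])%:R)
                       (lam * (size (a :: x))%:R + lam * (size (b :: y))%:R).
rewrite -EDG_cons in m1 m2 m3 m4.
have T1 := ED_tri a p b. rewrite (ED_sym p b) in T1.
have T2 := ED_tri a p [::]. rewrite (ED_nil_r p) in T2.
have T3 := ED_tri b p [::]. rewrite (ED_nil_r p) (ED_nil_r b) -(ED_nil_l b) in T3.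
move: T1 T2 T3; rewrite -!(ler_nat R) !natrD => T1 T2 T3.
have P0 := ler0n R (size p).
have Q := lamD lam (size P + size Sx) (size Sy). rewrite lamD in Q.
case: Ex => [Ex|[Ex Sx']]; case: Ey => [Ey|[Ey Sy']];
  move: Ex Ey => /(congr1 (fun n => n%:R : R)) Ex /(congr1 (fun n => n%:R : R)) Ey;
  rewrite natrD in Ex; rewrite natrD in Ey.
- have I := IH x y ltac:(clear -Hx; lia) ltac:(clear -Hy; lia).
  clear m2 m3 m4 T2 T3 Ha Hb IH.
  move: m1 T1 I Ex Ey P0 l0 Q. genR. intros. lra.
- rewrite size_cat in Sy'.
  have I := IH x (b :: y) ltac:(clear -Hx; lia) ltac:(clear -Sy'; rewrite [size (b :: y)]/=; lia).
  clear m1 m2 m4 T1 T3 Ha Hb IH.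
  move: m3 T2 I Ex Ey P0 l0 Q. genR. intros. lra.
- rewrite size_cat in Sx'.
  have I := IH (a :: x) y ltac:(clear -Sx'; rewrite [size (a :: x)]/=; lia) ltac:(clear -Hy; lia).
  clear m1 m3 m4 T1 T2 Ha Hb IH.
  move: m2 T3 I Ex Ey P0 l0 Q. genR. intros. lra.
- rewrite size_cat in Sx'; rewrite size_cat in Sy'.
  have I := IH (a :: x) (b :: y) ltac:(clear -Sx'; rewrite [size (a :: x)]/=; lia)
                                  ltac:(clear -Sy'; rewrite [size (b :: y)]/=; lia).
  clear m1 m2 m3 m4 T1 T2 T3 Ha Hb IH.
  move: I Ex Ey P0 l0 Q. genR. intros. lra.
Qed.

Lemma part1 {A : finType} {R : realFieldType} (lam : R) (x y : seq (seq A)) F vx vy :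
  0 <= lam -> summary_tree_of x y F vx vy -> EDG lam x y <= error lam x y F vx vy.
Proof.
move=> l0 [Lx [Ly [Ex Ey Sx Sy]]]; rewrite /error /L_T Ex Ey /=.
have [P [Sx' [Sy' [eX eY HP]]]] := tree_split Ex Ey.
have A1 := Al_AED Sx; have A2 := Al_AED Sy.
have M := lam_mono lam _ _ l0 HP.
rewrite eX eY size_cat in Sx Sy; rewrite size_cat in Sy.
have L := lower lam P Sx' Sy' x y l0 Sx Sy.
rewrite -eX -eY in L.
move: A1 A2; rewrite -!(ler_nat R) => A1 A2.
move: L M A1 A2. genR. intros. lra.
Qed.

Lemma min4_cases {R : realFieldType} (u v w z : R) :
  let m := Order.min (Order.min u v) (Order.min w z) in
  m = u \/ m = v \/ m = w \/ m = z.
Proof.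
rewrite /=; case: (leP u v) => _; case: (leP w z) => _; case: leP => _; tauto.
Qed.

Lemma Bif_ex {A : finType} {R : realFieldType} (lam : R) n (x y : seq (seq A)) :
  (size x + size y <= n)%N -> exists F vx vy, Bif lam x y F vx vy.
Proof.
elim: n x y => [|n IH] [|a x] [|b y] //= H.
- by exists [::], [::], [::]; exact: Bif_nil.
- by exists [::], [::], [::]; exact: Bif_nil.
- have [F [vx [vy B]]] := IH [::] y H.
  by exists [:: LNode b F], [::], (0%N :: vy); exact: Bif_xnil B.
- have [F [vx [vy B]]] := IH x [::] ltac:(clear -H; rewrite /= in H *; lia).
  by exists [:: LNode a F], (0%N :: vx), [::]; exact: Bif_ynil B.
- have := min4_cases (EDG lam x y + lam + (ED a b)%:R)
                       (EDG lam (a :: x) y + lam + (ED [::] b)%:R)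
                       (EDG lam x (b :: y) + lam + (ED a [::])%:R)
                       (lam * (size (a :: x))%:R + lam * (size (b :: y))%:R).
  rewrite -EDG_cons; case=> [E|[E|[E|E]]].
  + have [F [vx [vy B]]] := IH x y ltac:(clear -H; lia).
    by exists [:: LNode a F], (0%N :: vx), (0%N :: vy); exact: Bif_sub E B.
  + have [F [vx [vy B]]] := IH (a :: x) y ltac:(clear -H; rewrite /=; lia).
    by exists [:: LNode b F], (0%N :: vx), (0%N :: vy); exact: Bif_ins E B.
  + have [F [vx [vy B]]] := IH x (b :: y) ltac:(clear -H; rewrite /=; lia).
    by exists [:: LNode a F], (0%N :: vx), (0%N :: vy); exact: Bif_del E B.
  + by exists [:: chain a x; chain b y], (0%N :: nseq (size x) 0%N), (1%N :: nseq (size y) 0%N);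
      exact: Bif_giveup E.
Qed.

Lemma label_chain {A : finType} (x : seq (seq A)) a : label (chain a x) = a.
Proof. by case: x. Qed.

Lemma labels_chain {A : finType} (x : seq (seq A)) a :
  labels_at (children (chain a x)) (nseq (size x) 0%N) = Some x.
Proof. elim: x a => [|b x IH] a //=. by rewrite IH /= label_chain. Qed.

Lemma tsize_chain {A : finType} (x : seq (seq A)) a :
  Defs.tsize (chain a x) = (size x).+1.
Proof. elim: x a => [|b x IH] a //=. by rewrite IH addn0. Qed.

Lemma tree_size1 {A : finType} (b : seq A) F :
  tree_size [:: LNode b F] = (tree_size F).+1.
Proof. by rewrite /tree_size /= addn0. Qed.

Lemma lamS {R : realFieldType} (lam : R) (n : nat) :
  lam * (n.+1)%:R = lam * n%:R + lam.
Proof. by rewrite -addn1 lamD mulr1n mulr1. Qed.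

Lemma Bif_up {A : finType} {R : realFieldType} (lam : R) (x y : seq (seq A)) F vx vy :
  0 <= lam -> Bif lam x y F vx vy ->
  exists Lx Ly, [/\ labels_at F vx = Some Lx, labels_at F vy = Some Ly,
                    (size x <= size Lx)%N, (size y <= size Ly)%N &
     (AED x Lx)%:R + (AED y Ly)%:R + lam * (tree_size F)%:R <= EDG lam x y].
Proof.
move=> l0; elim=> {x y F vx vy}.
- exists [::], [::]; split => //.
  rewrite AED_self EDG_nil_l /tree_size /=; lra.
- move=> b y F vx vy _ [Lx [Ly [Ex Ey Sx Sy H]]].
  exists [::], (b :: Ly); split => //=; first by rewrite Ey.
  have C := AED_cons b Sy. move: C; rewrite -(ler_nat R) => C.
  rewrite tree_size1 lamS AED_self.
  have := ler0n R (AED [::] Lx).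
  rewrite EDG_nil_l in H; rewrite ?EDG_nil_l ?[size (b :: y)]/= lamS.
  move: H C. genR. intros. lra.
- move=> a x F vx vy _ [Lx [Ly [Ex Ey Sx Sy H]]].
  exists (a :: Lx), [::]; split => //=; first by rewrite Ex.
  have C := AED_cons a Sx. move: C; rewrite -(ler_nat R) => C.
  rewrite tree_size1 lamS AED_self.
  have := ler0n R (AED [::] Ly).
  rewrite EDG_nil_r in H; rewrite ?EDG_nil_r ?[size (a :: x)]/= lamS.
  move: H C. genR. intros. lra.
- move=> a b x y F vx vy E _ [Lx [Ly [Ex Ey Sx Sy H]]].
  exists (a :: Lx), (a :: Ly); split;
    try (by rewrite /= ?Ex ?Ey); try (by clear -Sx Sy; rewrite /= in Sx Sy *; lia).
  have C1 := AED_cons a Sx; have C2 := AED_subst a b Sy.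
  move: C1 C2; rewrite -!(ler_nat R) natrD => C1 C2.
  rewrite tree_size1 lamS E.
  move: H C1 C2. genR. intros. lra.
- move=> a b x y F vx vy E _ [Lx [Ly [Ex Ey Sx Sy H]]].
  exists (b :: Lx), (b :: Ly); split;
    try (by rewrite /= ?Ex ?Ey); try (by clear -Sx Sy; rewrite /= in Sx Sy *; lia).
  have C1 := AED_insf b Sx; have C2 := AED_cons b Sy.
  move: C1 C2; rewrite -!(ler_nat R) natrD => C1 C2.
  rewrite tree_size1 lamS E ED_nil_l.
  move: H C1 C2. genR. intros. lra.
- move=> a b x y F vx vy E _ [Lx [Ly [Ex Ey Sx Sy H]]].
  exists (a :: Lx), (a :: Ly); split;
    try (by rewrite /= ?Ex ?Ey); try (by clear -Sx Sy; rewrite /= in Sx Sy *; lia).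
  have C1 := AED_cons a Sx; have C2 := AED_insf a Sy.
  move: C1 C2; rewrite -!(ler_nat R) natrD => C1 C2.
  rewrite tree_size1 lamS E ED_nil_r.
  move: H C1 C2. genR. intros. lra.
- move=> a b x y E.
  exists (a :: x), (b :: y); split => //.
  + by rewrite /= labels_chain label_chain.
  + by rewrite /= labels_chain label_chain.
  + rewrite !AED_self E.
    have -> : tree_size [:: chain a x; chain b y] = ((size x).+1 + (size y).+1)%N.
      by rewrite /tree_size /= addn0 !tsize_chain.
    rewrite lamD [size (a :: x)]/= [size (b :: y)]/=; lra.
Qed.

Theorem theorem4 (A : finType) (R : realFieldType) (x y : seq (seq A)) (lam : R) :
  0 <= lam ->
  (* every labeled summary tree of {x, y} has error at least EDG(x, y, lam) *)
  (forall (F : seq (ltree A)) (vx vy : seq nat),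
      summary_tree_of x y F vx vy -> EDG lam x y <= error lam x y F vx vy) /\
  (* BuildBifurcation(x, y, lam) produces a tree *)
  (exists (F : seq (ltree A)) (vx vy : seq nat), Bif lam x y F vx vy) /\
  (* and any tree it produces is a summary tree of {x, y} with error EDG(x, y, lam) *)
  (forall (F : seq (ltree A)) (vx vy : seq nat), Bif lam x y F vx vy ->
      summary_tree_of x y F vx vy /\ error lam x y F vx vy = EDG lam x y).
Proof.
move=> l0; split; [|split].
- by move=> F vx vy H; exact: part1 l0 H.
- exact: Bif_ex (leqnn _).
- move=> F vx vy B; have [Lx [Ly [Ex Ey Sx Sy Hle]]] := Bif_up lam x y F vx vy l0 B.
  have HS : summary_tree_of x y F vx vy by exists Lx, Ly; split.
  split => //; apply: le_anti; apply/andP; split; last exact: part1 l0 HS.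
  by rewrite /error /L_T Ex Ey.
Qed.
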